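(* Let $\Gamma$ be an infinite, connected, locally finite weighted graph, and let $X$ be a finite subset of its vertex set. Then the following are equivalent: (1) every function $f:X\to\mathbb{R}$ extends to a harmonic function on all of $\Gamma$; (2) there is no non-zero finitely supported function on $\Gamma$ that is harmonic on $\Gamma\setminus X$.
   Context: A weighted graph has undirected edges without loops or multiple edges, with weights $\omega_{xy}=\omega_{yx}>0$ and degrees $\deg x=\sum_{y\sim x}\omega_{xy}$. The Laplacian is $\Delta f(x)=f(x)-\frac{1}{\deg x}\sum_{y\sim x}\omega_{xy}f(y)$. A function $f$ is harmonic on a set $A$ of vertices if $\Delta f(x)=0$ for every $x\in A$, and harmonic if this holds for all vertices. *)

(* Defs.v *)
From HB Require Import structures.
From mathcomp Require Import all_boot all_order all_algebra.
From mathcomp Require Import reals.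
Set Implicit Arguments. Unset Strict Implicit. Unset Printing Implicit Defensive.
Import Order.TTheory GRing.Theory Num.Theory.
Local Open Scope ring_scope.

Record wgraph (R : realType) (V : eqType) := WGraph {
  nbr : V -> seq V;
  w : V -> V -> R;
  nbr_uniq : forall x, uniq (nbr x);
  nbr_sym : forall x y, (y \in nbr x) = (x \in nbr y);
  nbr_irrefl : forall x, x \notin nbr x;
  w_sym : forall x y, w x y = w y x;
  w_pos : forall x y, y \in nbr x -> 0 < w x y
}.

Section Graphs.
Variables (R : realType) (V : eqType) (G : wgraph R V).

Definition adj : rel V := fun x y => y \in nbr G x.

Definition deg (x : V) : R := \sum_(y <- nbr G x) w G x y.

Definition laplacian (f : V -> R) (x : V) : R :=
  f x - (deg x)^-1 * \sum_(y <- nbr G x) w G x y * f y.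

Definition harmonic_on (A : pred V) (f : V -> R) : Prop :=
  forall x, A x -> laplacian f x = 0.

Definition harmonic (f : V -> R) : Prop := forall x, laplacian f x = 0.

Definition connected : Prop :=
  forall x y : V, exists p : seq V, path adj x p /\ last x p = y.

Definition infinite_vertices : Prop := ~ exists s : seq V, forall v : V, v \in s.

Definition finitely_supported (f : V -> R) : Prop :=
  exists s : seq V, forall v, v \notin s -> f v = 0.

End Graphs.

(* Main.v *)
Require Import Defs.
From HB Require Import structures.
From mathcomp Require Import all_boot all_order all_algebra.
From mathcomp Require Import reals.
From mathcomp Require Import ring lra.
From Stdlib Require Import ClassicalEpsilon FunctionalExtensionality Classical.
Set Implicit Arguments. Unset Strict Implicit. Unset Printing Implicit Defensive.
Import Order.TTheory GRing.Theory Num.Theory.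
Local Open Scope ring_scope.

Section SeqSums.
Variable R : realType.

Lemma sum_filter_swap (T : eqType) (A B : seq T) (g : T -> R) :
  uniq A -> uniq B -> \sum_(z <- A | z \in B) g z = \sum_(z <- B | z \in A) g z.
Proof.
move=> uA uB; rewrite -[LHS]big_filter -[RHS]big_filter; apply: perm_big; apply: uniq_perm.
- exact: filter_uniq.
- exact: filter_uniq.
by move=> z; rewrite !mem_filter andbC.
Qed.

Lemma sum_pred1 (T : eqType) (s : seq T) z0 (g : T -> R) :
  uniq s -> \sum_(z <- s) (if z == z0 then g z else 0) = if z0 \in s then g z0 else 0.
Proof.
elim: s => [|a s IH] /=; first by rewrite big_nil.
case/andP => nas us; rewrite big_cons IH // in_cons.
have [e|ne] := eqVneq a z0.
  by subst a; rewrite /= (negbTE nas) addr0.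
by rewrite /= add0r.
Qed.

Lemma sum_restrict (T : eqType) (s : seq T) (P : pred T) (g : T -> R) :
  (forall z, z \in s -> ~~ P z -> g z = 0) ->
  \sum_(z <- s | P z) g z = \sum_(z <- s) g z.
Proof.
move=> H; rewrite big_mkcond /=; apply: eq_big_seq => z zs.
by case: ifP => // /negbT /(H z zs) ->.
Qed.
End SeqSums.

Section Graph.
Variables (R : realType) (V : eqType) (G : wgraph R V).

Lemma lap_lin (a : R) (F H : V -> R) x :
  laplacian G (fun y => a * F y + H y) x = a * laplacian G F x + laplacian G H x.
Proof.
rewrite /laplacian.
have -> : \sum_(y <- nbr G x) w G x y * (a * F y + H y) =
   a * \sum_(y <- nbr G x) w G x y * F y + \sum_(y <- nbr G x) w G x y * H y.
  rewrite mulr_sumr -big_split /=; apply: eq_bigr => y _; ring.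
by rewrite mulrDr addrA; ring.
Qed.

Lemma lap_ext (F H : V -> R) x :
  (forall y, y \in x :: nbr G x -> F y = H y) -> laplacian G F x = laplacian G H x.
Proof.
move=> E; rewrite /laplacian (E x (mem_head _ _)).
rewrite (@eq_big_seq _ _ _ _ _ _ (fun y => w G x y * H y)) //.
by move=> y yn; rewrite E // in_cons yn orbT.
Qed.
End Graph.

Section Abstract.
Variable R : realType.

Lemma mono_of_dec (T : Type) (P : nat -> T -> Prop) :
  (forall m G, P m.+1 G -> P m G) -> forall m m' G, (m <= m')%N -> P m' G -> P m G.
Proof.
move=> Pdec m m' G /subnKC <-; elim: (m' - m)%N => [|k IH]; first by rewrite addn0.
by rewrite addnS => /Pdec /IH.
Qed.

Lemma stab (T : eqType) (S : seq T) (P : nat -> (T -> R) -> Prop) :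
  (forall m, P m (fun _ => 0)) ->
  (forall m a G H, P m G -> P m H -> P m (fun x => a * G x + H x)) ->
  (forall m G, P m.+1 G -> P m G) ->
  (forall m G, P m G -> forall x, x \notin S -> G x = 0) ->
  exists M, forall m G, (M <= m)%N -> P M G -> P m G.
Proof.
elim: S P => [|s S IH] P P0 PL Pdec Psupp.
  exists 0%N => m G _ PG.
  have -> : G = (fun _ => 0) by apply: functional_extensionality => x; exact: (Psupp 0%N G PG).
  exact: P0.
have Pmono := mono_of_dec Pdec.
pose P' m G := P m G /\ G s = 0.
have [M1 HM1] : exists M, forall m G, (M <= m)%N -> P' M G -> P' m G.
  apply: IH.
  - by move=> m; split.
  - move=> m a G H [PG Gs] [PH Hs]; split; first exact: PL.
    by rewrite Gs Hs mulr0 addr0.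
  - by move=> m G [PG Gs]; split => //; apply: Pdec.
  - move=> m G [PG Gs] x xS; have [->|ne] := eqVneq x s; first exact: Gs.
    by apply: (Psupp m G PG); rewrite in_cons negb_or ne.
have P'mono := mono_of_dec (fun m G (H : P' m.+1 G) => match H with conj a b => conj (Pdec _ _ a) b end).
case: (classic (forall m, (M1 <= m)%N -> exists H, P m H /\ H s <> 0)) => [Hall|Hnot].
  exists M1 => m G Mm PG.
  have [H [PH Hs]] := Hall m Mm.
  have PH1 := Pmono _ _ _ Mm PH.
  pose c := G s / H s.
  pose K := fun x => (- c) * H x + G x.
  have PK : P' M1 K.
    split; first exact: PL.
    rewrite /K /c; field; exact/eqP.
  have [PKm _] := HM1 m K Mm PK.
  have -> : G = (fun x => c * H x + K x).
    by apply: functional_extensionality => x; rewrite /K; ring.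
  exact: PL.
have [m2 Hm2] := not_all_ex_not _ _ Hnot.
have [M1m2 Hz] : (M1 <= m2)%N /\ forall H, P m2 H -> H s = 0.
  split; first by apply: NNPP => H; apply: Hm2 => H'; case: (H H').
  move=> H PH; apply: NNPP => Hs; apply: Hm2 => _; by exists H.
exists m2 => m G m2m PG.
have PG' : P' M1 G by apply: (P'mono _ m2) => //; split => //; apply: Hz.
by case: (HM1 m G (leq_trans M1m2 m2m) PG').
Qed.

Lemma dual (T J : eqType) (l : J -> (T -> R) -> R) (phi : (T -> R) -> R) (I : seq J) :
  (forall j a F H, l j (fun x => a * F x + H x) = a * l j F + l j H) ->
  (forall a F H, phi (fun x => a * F x + H x) = a * phi F + phi H) ->
  (forall F, (forall j, j \in I -> l j F = 0) -> phi F = 0) ->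
  exists mus : seq (R * J), (forall p, p \in mus -> p.2 \in I) /\
    forall F, phi F = \sum_(p <- mus) p.1 * l p.2 F.
Proof.
move=> Hl; elim: I phi => [|j I IH] phi Hphi Hker.
  exists [::]; split => // F; rewrite big_nil; apply: Hker => j'; by rewrite in_nil.
case: (classic (exists F0, (forall j', j' \in I -> l j' F0 = 0) /\ l j F0 <> 0))
  => [[F0 [F0k F0j]] | Hno].
  have F0j' : l j F0 != 0 by apply/eqP.
  pose c := phi F0 / l j F0.
  pose phi' F := phi F - c * l j F.
  have lin' : forall a F H, phi' (fun x => a * F x + H x) = a * phi' F + phi' H.
    by move=> a F H; rewrite /phi' Hphi Hl; ring.
  have ker' : forall F, (forall j', j' \in I -> l j' F = 0) -> phi' F = 0.
    move=> F Fk.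
    pose F' := fun x => (- (l j F / l j F0)) * F0 x + F x.
    have E : phi F' = 0.
      apply: Hker => j'; rewrite in_cons => /orP [/eqP -> | j'I].
        by rewrite /F' Hl; field.
      by rewrite /F' Hl (F0k j' j'I) (Fk j' j'I) mulr0 addr0.
    move: E; rewrite /F' Hphi => E.
    rewrite /phi' /c; transitivity (- (l j F / l j F0) * phi F0 + phi F); first by field.
    exact: E.
  have [mus [Hm Hs]] := IH phi' lin' ker'.
  exists ((c, j) :: mus); split.
    move=> p; rewrite [p \in _]in_cons => /orP [/eqP -> | pm]; first by rewrite mem_head.
    by rewrite in_cons (Hm p pm) orbT.
  move=> F; rewrite big_cons -Hs /phi' /=; ring.
have ker : forall F, (forall j', j' \in I -> l j' F = 0) -> phi F = 0.
  move=> F Fk; apply: Hker => j'; rewrite in_cons => /orP [/eqP -> | j'I]; last exact: Fk.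
  by apply: NNPP => nz; apply: Hno; exists F.
have [mus [Hm Hs]] := IH phi Hphi ker.
by exists mus; split => // p pm; rewrite in_cons (Hm p pm) orbT.
Qed.
End Abstract.

Section Main.
Variables (R : realType) (V : eqType) (G : wgraph R V) (X : seq V).
Hypothesis Hinf : infinite_vertices V.
Hypothesis Hcon : connected G.

Lemma exists_other (x : V) : exists y, y != x.
Proof.
apply: NNPP => H; apply: Hinf; exists [:: x] => v; rewrite mem_seq1.
apply/negPn/negP => nv; apply: H; by exists v.
Qed.

Lemma deg_gt0 x : 0 < deg G x.
Proof.
have [y yx] := exists_other x.
have [[|a p] [pp lp]] := Hcon x y.
  by move: yx; rewrite -lp /= eqxx.
move: pp => /= /andP [an _].
rewrite /deg (perm_big _ (perm_to_rem an)) big_cons.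
have h1 : 0 < w G x a by apply: w_pos.
have h2 : 0 <= \sum_(j <- rem a (nbr G x)) w G x j.
  rewrite big_seq; apply: sumr_ge0 => z zr; apply/ltW/w_pos.
  exact: (mem_rem zr).
by apply: (lt_le_trans h1); rewrite lerDl.
Qed.

Lemma deg_neq0 x : deg G x != 0.
Proof. by rewrite gt_eqF // deg_gt0. Qed.

Fixpoint ball (v0 : V) (n : nat) : seq V :=
  match n with 0 => v0 :: X | n'.+1 => ball v0 n' ++ flatten (map (nbr G) (ball v0 n')) end.

Lemma ball_S v0 n : {subset ball v0 n <= ball v0 n.+1}.
Proof. by move=> z zb /=; rewrite mem_cat zb. Qed.

Lemma ball_mono v0 n m : (n <= m)%N -> {subset ball v0 n <= ball v0 m}.
Proof.
move=> /subnKC <-; elim: (m - n)%N => [|k IH]; first by rewrite addn0.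
by move=> z /IH zb; rewrite addnS; apply: ball_S.
Qed.

Lemma ball_nbr v0 n x y : x \in ball v0 n -> y \in nbr G x -> y \in ball v0 n.+1.
Proof.
move=> xb yn /=; rewrite mem_cat; apply/orP; right.
by apply/flatten_mapP; exists x.
Qed.

Lemma ball_X v0 x : x \in X -> x \in ball v0 0.
Proof. by move=> xX /=; rewrite in_cons xX orbT. Qed.

Lemma ball_all v0 z : exists n, z \in ball v0 n.
Proof.
have [p [pp lp]] := Hcon v0 z.
suff : forall p x n, x \in ball v0 n -> path (adj G) x p -> last x p \in ball v0 (n + size p).
  by move=> /(_ p v0 0%N); rewrite lp => H; exists (size p); apply: H => //=; rewrite mem_head.
elim=> [|a q IH] x n xb /=; first by rewrite addn0.
case/andP => xa qa; rewrite addnS -addSn; apply: IH => //.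
exact: (ball_nbr xb).
Qed.


Lemma deg_lap (f : V -> R) y :
  deg G y * laplacian G f y = deg G y * f y - \sum_(z <- nbr G y) w G y z * f z.
Proof. by rewrite /laplacian mulrBr mulrA mulfV ?deg_neq0 // mul1r. Qed.

Lemma exists_max (u : V -> R) (s : seq V) :
  s != [::] -> exists2 x0, x0 \in s & forall y, y \in s -> u y <= u x0.
Proof.
elim: s => [|a s IH] // _.
case: (eqVneq s [::]) => [->|sne].
  by exists a; rewrite ?mem_head // => y; rewrite mem_seq1 => /eqP ->.
have [b bs Hb] := IH sne.
case: (lerP (u a) (u b)) => ab.
  exists b; first by rewrite in_cons bs orbT.
  by move=> y; rewrite in_cons => /orP [/eqP -> | /Hb].
exists a; first by rewrite mem_head.
move=> y; rewrite in_cons => /orP [/eqP -> // | /Hb yb].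
exact: (le_trans yb (ltW ab)).
Qed.

Lemma propagate (u : V -> R) x M y :
  u x = M -> (forall z, u z <= M) -> laplacian G u x = 0 -> y \in nbr G x -> u y = M.
Proof.
move=> ux uM lx yn.
have S1 : \sum_(z <- nbr G x) w G x z * u z = deg G x * M.
  have := deg_lap u x; rewrite lx mulr0 ux => /eqP; rewrite eq_sym subr_eq0 => /eqP ->.
  by [].
have E : \sum_(z <- nbr G x) w G x z * (M - u z) = 0.
  rewrite (eq_bigr (fun z => w G x z * M - w G x z * u z)); last by move=> z _; rewrite mulrBr.
  by rewrite sumrB S1 -mulr_suml subrr.
move: E; rewrite big_seq => /eqP; rewrite psumr_eq0; last first.
  move=> z zn; apply: mulr_ge0; first exact/ltW/w_pos.
  by rewrite subr_ge0.
move=> /allP /(_ y yn); rewrite yn /= mulf_eq0 => /orP [/eqP w0 | ].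
  by have := w_pos yn; rewrite w0 ltxx.
by rewrite subr_eq0 => /eqP.
Qed.

Lemma maxprinc (u : V -> R) (S0 : seq V) v :
  (forall z, z \notin S0 -> u z = 0) -> harmonic G u -> 0 < u v -> False.
Proof.
move=> supp hu uv.
have vS : v \in S0 by apply: contraTT uv => /supp ->; rewrite ltxx.
have S0ne : S0 != [::] by apply/eqP => e; rewrite e in vS.
have [x0 x0S Hx0] := exists_max u S0ne.
have vM : u v <= u x0 := Hx0 v vS.
have Mpos : 0 < u x0 := lt_le_trans uv vM.
have uM : forall z, u z <= u x0.
  move=> z; case: (boolP (z \in S0)) => [/Hx0 // | /supp ->]; exact: ltW.
have allM : forall p x, u x = u x0 -> path (adj G) x p -> u (last x p) = u x0.
  elim=> [|a p IH] x ux //= /andP [xa pa].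
  by apply: IH => //; apply: (propagate ux uM (hu x) xa).
apply: Hinf; exists S0 => z.
have [p [pp lp]] := Hcon x0 z.
have uz : u z = u x0 by rewrite -lp; apply: allM.
apply: contraT => /supp; rewrite uz => e; by rewrite e ltxx in Mpos.
Qed.

Lemma fs_harmonic_zero (u : V -> R) :
  finitely_supported u -> harmonic G u -> forall v, u v = 0.
Proof.
move=> [S0 supp] hu v; apply: NNPP => nz.
case: (ltrgtP (u v) 0) => [neg|pos|e] //.
  pose u' := fun x => (-1) * u x + 0.
  apply: (@maxprinc u' S0 v).
  - by move=> z /supp; rewrite /u' => ->; rewrite mulr0 addr0.
  - move=> x; rewrite /u' (lap_lin G (-1) u (fun _ => 0) x) hu /laplacian big1 ?mulr0 ?subr0 ?mulr0 ?addr0 //.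
    by move=> y _; rewrite mulr0.
  - by rewrite /u' addr0 mulN1r oppr_gt0.
exact: (maxprinc supp hu pos).
Qed.

Lemma green (u h : V -> R) (S T : seq V) :
  uniq S -> uniq T -> (forall z, z \notin S -> u z = 0) -> {subset S <= T} ->
  (forall x y, x \in S -> y \in nbr G x -> y \in T) ->
  \sum_(y <- T) h y * (deg G y * laplacian G u y) =
  \sum_(x <- S) u x * (deg G x * laplacian G h x).
Proof.
move=> uS uT supp ST NT.
rewrite (eq_bigr (fun y => h y * deg G y * u y -
          \sum_(z <- nbr G y) h y * (w G y z * u z))); last first.
  by move=> y _; rewrite deg_lap mulrBr mulr_sumr mulrA.
rewrite [RHS](eq_bigr (fun x => h x * deg G x * u x -
          \sum_(t <- nbr G x) u x * (w G x t * h t))); last first.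
  by move=> x _; rewrite deg_lap mulrBr mulr_sumr mulrA; congr (_ - _); ring.
rewrite !sumrB; congr (_ - _).
  rewrite -(@sum_restrict _ _ T (mem S)); last first.
    by move=> z _ /supp ->; rewrite mulr0.
  rewrite sum_filter_swap // sum_restrict //.
  by move=> z /ST ->.
transitivity (\sum_(y <- T) \sum_(z <- S) (if z \in nbr G y then h y * (w G y z * u z) else 0)).
  apply: eq_bigr => y _.
  rewrite -big_mkcond -(@sum_restrict _ _ (nbr G y) (mem S)); last first.
    by move=> z _ /supp ->; rewrite !mulr0.
  by rewrite sum_filter_swap // nbr_uniq.
rewrite exchange_big /=; apply: eq_big_seq => z zS.
rewrite -big_mkcond /=.
transitivity (\sum_(y <- T | y \in nbr G z) u z * (w G z y * h y)).
  by apply: eq_big => [y|y _]; [rewrite nbr_sym | rewrite w_sym; ring].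
rewrite sum_filter_swap ?nbr_uniq // sum_restrict //.
by move=> y yn; rewrite (NT z y zS yn).
Qed.

Lemma one_to_two :
  (forall f : V -> R, exists h : V -> R, harmonic G h /\ forall x, x \in X -> h x = f x) ->
  ~ (exists u : V -> R, finitely_supported u /\ (exists v, u v <> 0) /\
       harmonic_on G (fun x => x \notin X) u).
Proof.
move=> H1 [u [[S0 supp0] [[v uv] hX]]].
pose S := undup S0.
have supp : forall z, z \notin S -> u z = 0 by move=> z; rewrite mem_undup; exact: supp0.
pose T := undup (X ++ S ++ flatten (map (nbr G) S)).
pose c := fun y => deg G y * laplacian G u y.
have [h [hh hc]] := H1 c.
have Gr := @green u h S T (undup_uniq _) (undup_uniq _) supp.
have E : \sum_(y <- T) c y ^+ 2 = 0.
  rewrite -[RHS](_ : \sum_(x <- S) u x * (deg G x * laplacian G h x) = 0); last first.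
    by rewrite big1 // => x _; rewrite hh !mulr0.
  rewrite -Gr.
  - apply: eq_bigr => y _; case: (boolP (y \in X)) => yX.
      by rewrite hc // expr2.
    by rewrite /c (hX y yX) !mulr0 expr2 mulr0.
  - by move=> z zS; rewrite mem_undup !mem_cat zS orbT.
  - move=> x y xS yn; rewrite mem_undup !mem_cat; apply/orP; right; apply/orP; right.
    by apply/flatten_mapP; exists x.
have c0 : forall y, c y = 0.
  move=> y; case: (boolP (y \in T)) => yT.
    move: E => /eqP; rewrite big_seq psumr_eq0; last by move=> i _; apply: sqr_ge0.
    by move=> /allP /(_ y yT); rewrite yT /= sqrf_eq0 => /eqP.
  have yX : y \notin X by apply: contra yT => yX; rewrite mem_undup mem_cat yX.
  by rewrite /c (hX y yX) mulr0.
have hu : harmonic G u.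
  move=> y; have := c0 y; rewrite /c => /eqP; rewrite mulf_eq0 (negbTE (deg_neq0 y)) /=.
  by move/eqP.
exact: uv (fs_harmonic_zero (ex_intro _ S0 supp0) hu v).
Qed.

Lemma lap0 x : laplacian G (fun _ => 0) x = 0.
Proof. by rewrite /laplacian big1 ?mulr0 ?subr0 // => y _; rewrite mulr0. Qed.

Lemma lap_scale a (F : V -> R) x :
  laplacian G (fun y => a * F y) x = a * laplacian G F x.
Proof.
rewrite (@lap_ext _ _ G (fun y => a * F y) (fun y => a * F y + 0)); last by move=> y _; rewrite addr0.
by rewrite (lap_lin G a F (fun _ => 0) x) lap0 addr0.
Qed.

Lemma inl_eq (z z' : V) : (inl z == inl z' :> V + V) = (z == z').
Proof. by apply/eqP/eqP => [[]|->]. Qed.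

Hypothesis NoU : ~ (exists u : V -> R, finitely_supported u /\ (exists v, u v <> 0) /\
       harmonic_on G (fun x => x \notin X) u).

Lemma basis_elem (B : seq V) x : x \in X ->
  exists E : V -> R, (forall z, z \in B -> laplacian G E z = 0) /\ E x = 1 /\
     forall y, y \in X -> y != x -> E y = 0.
Proof.
move=> xX; apply: NNPP => Hno.
pose l := fun (j : V + V) (F : V -> R) => match j with inl z => laplacian G F z | inr y => F y end.
pose I := map inl B ++ map inr [seq y <- X | y != x].
have lin_l : forall j a F H, l j (fun x => a * F x + H x) = a * l j F + l j H.
  by move=> [z|z] a F H //=; rewrite lap_lin.
have lin_phi : forall a (F H : V -> R), (fun F => F x) (fun x => a * F x + H x) = a * F x + H x.
  by [].
have ker : forall F, (forall j, j \in I -> l j F = 0) -> F x = 0.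
  move=> F Fk; apply: NNPP => nz; apply: Hno.
  exists (fun z => (F x)^-1 * F z); split; last split.
  - move=> z zB; rewrite lap_scale.
    have -> : laplacian G F z = 0 by apply: (Fk (inl z)); rewrite mem_cat map_f.
    by rewrite mulr0.
  - by rewrite mulVf //; apply/eqP.
  - move=> y yX yx.
    have -> : F y = 0.
      by apply: (Fk (inr y)); rewrite mem_cat map_f ?orbT // mem_filter yx.
    by rewrite mulr0.
have [mus [Hm Hs]] := @dual R V _ l (fun F => F x) I lin_l lin_phi ker.
pose a := fun z => \sum_(p <- mus) (if p.2 == inl z then p.1 else 0).
pose u := fun z => (deg G z)^-1 * a z.
pose delta := fun (y t : V) => if t == y then 1 else (0 : R).
pose C := fun (p : R * (V + V)) (y : V) => match p.2 with
  inl z => p.1 * laplacian G (delta y) z | inr _ => 0 end.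
have key : forall y, deg G y * laplacian G u y = \sum_(p <- mus) C p y.
  move=> y; rewrite deg_lap.
  have Hu : deg G y * u y = a y by rewrite /u mulrA mulfV ?deg_neq0 // mul1r.
  pose Bp := fun (p : R * (V + V)) => match p.2 with
    inl z => if z \in nbr G y then w G y z * (deg G z)^-1 * p.1 else 0 | inr _ => 0 end.
  have Hn : \sum_(z <- nbr G y) w G y z * u z = \sum_(p <- mus) Bp p.
    transitivity (\sum_(z <- nbr G y) \sum_(p <- mus)
        (if p.2 == inl z then w G y z * (deg G z)^-1 * p.1 else 0)).
      apply: eq_bigr => z _; rewrite /u /a mulrA mulr_sumr; apply: eq_bigr => p _.
      by case: ifP => _; [ring | rewrite mulr0].
    rewrite exchange_big; apply: eq_bigr => -[c [z0|z0]] _ /=.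
      rewrite (eq_bigr (fun z => if z == z0 then w G y z * (deg G z)^-1 * c else 0)).
        by rewrite sum_pred1 ?nbr_uniq.
      by move=> z _; rewrite inl_eq eq_sym.
    by rewrite big1.
  rewrite Hu Hn /a -sumrB; apply: eq_bigr => -[c [z|z]] _; rewrite /Bp /C /=; last by rewrite subr0.
  rewrite /laplacian /delta.
  rewrite (eq_bigr (fun t => if t == y then w G z t else 0)); last first.
    by move=> t _; case: ifP; rewrite ?mulr1 ?mulr0.
  rewrite sum_pred1 ?nbr_uniq // inl_eq -nbr_sym w_sym.
  by case: (z == y); case: (y \in nbr G z) => /=; ring.
have inrI : forall z, inr z \in I -> z \in X /\ z != x.
  move=> z; rewrite mem_cat => /orP [/mapP [z' _] // | /mapP [z' z'f [->]]].
  by move: z'f; rewrite mem_filter => /andP [-> ->].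
have dy : forall y, (y \notin X) || (y == x) -> deg G y * laplacian G u y = delta y x.
  move=> y hy; rewrite key (Hs (delta y)); apply: eq_big_seq => -[c [z|z]] pm //=.
  have [zX zx] := inrI z (Hm _ pm).
  rewrite /C /delta /=; case: eqP => [ezy|]; last by rewrite mulr0.
  by move: hy; rewrite -ezy zX (negbTE zx).
apply: NoU; exists u; split; last split.
- exists (flatten [seq (match p.2 with inl z => [:: z] | inr _ => [::] end) | p <- mus]).
  move=> z zS; rewrite /u /a big1_seq ?mulr0 // => -[c [z'|z']] pm //=.
  case: eqP => // -[ez]; subst z'; exfalso; move/negP: zS; apply.
  by apply/flatten_mapP; exists (c, inl z) => //=; rewrite mem_seq1.
- apply: NNPP => H.
  have u0 : forall v, u v = 0 by move=> v; apply: NNPP => nz; apply: H; exists v.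
  have := dy x; rewrite eqxx orbT => /(_ isT).
  rewrite /delta eqxx (@lap_ext _ _ G u (fun _ => 0)); last by move=> y _; rewrite u0.
  by rewrite lap0 mulr0 => /eqP; rewrite eq_sym oner_eq0.
- move=> y yX; have := dy y; rewrite yX => /(_ isT).
  rewrite /delta; case: eqP => [exy|_]; first by move: yX; rewrite -exy xX.
  by move=> /eqP; rewrite mulf_eq0 (negbTE (deg_neq0 y)) => /eqP.
Qed.

Lemma lap_sum (s : seq V) (c : V -> R) (E : V -> V -> R) y :
  laplacian G (fun z => \sum_(i <- s) c i * E i z) y = \sum_(i <- s) c i * laplacian G (E i) y.
Proof.
elim: s => [|a s IH].
  by rewrite (@lap_ext _ _ G _ (fun _ => 0)) ?lap0 ?big_nil // => z _; rewrite big_nil.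
rewrite (@lap_ext _ _ G _ (fun z => c a * E a z + (fun z => \sum_(i <- s) c i * E i z) z)).
  by rewrite lap_lin IH big_cons.
by move=> z _; rewrite big_cons.
Qed.

Lemma extend_on (B : seq V) (f : V -> R) :
  exists F, (forall z, z \in B -> laplacian G F z = 0) /\ forall y, y \in X -> F y = f y.
Proof.
pose PE x (E : V -> R) := (forall z, z \in B -> laplacian G E z = 0) /\ E x = 1 /\
     forall y, y \in X -> y != x -> E y = 0.
pose Ef x := epsilon (inhabits (fun _ : V => 0 : R)) (PE x).
have HE : forall x, x \in X -> PE x (Ef x).
  by move=> x xX; apply: epsilon_spec; apply: basis_elem.
exists (fun z => \sum_(x <- undup X) f x * Ef x z); split.
  move=> z zB; rewrite lap_sum big1_seq // => x; rewrite mem_undup => /andP [_ xX].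
  by rewrite ((HE x xX).1 z zB) mulr0.
move=> y yX.
rewrite (eq_big_seq (fun x => if x == y then f x else 0)).
  by rewrite sum_pred1 ?undup_uniq // mem_undup yX.
move=> x; rewrite mem_undup => xX; have [_ [E1 E0]] := HE x xX.
case: eqP => [exy|/eqP nxy]; first by rewrite -exy E1 mulr1.
by rewrite E0 ?mulr0 // eq_sym.
Qed.

Definition Harm v0 m (F : V -> R) := forall z, z \in ball v0 m -> laplacian G F z = 0.

Lemma step (f : V -> R) v0 (A A' : seq V) (g : V -> R) : {subset A <= A'} ->
  (forall m, exists F, Harm v0 m F /\ (forall y, y \in X -> F y = f y) /\
      (forall y, y \in A -> F y = g y)) ->
  exists g', (forall m, exists F, Harm v0 m F /\ (forall y, y \in X -> F y = f y) /\
      (forall y, y \in A' -> F y = g' y)) /\ forall y, y \in A -> g' y = g y.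
Proof.
move=> AA' Hyp.
pose P m (Gf : option V -> R) := exists t F, Harm v0 m F /\ (forall x, x \in X -> F x = t * f x) /\
  (forall y, y \in A -> F y = t * g y) /\ Gf None = t /\
  (forall y, Gf (Some y) = if y \in A' then F y else 0).
have P0 : forall m, P m (fun _ => 0).
  move=> m; exists 0, (fun _ => 0); split; last split; last split; last split.
  - by move=> z _; rewrite lap0.
  - by move=> x _; rewrite mul0r.
  - by move=> y _; rewrite mul0r.
  - by [].
  - by move=> y; case: ifP.
have PL : forall m a G1 G2, P m G1 -> P m G2 -> P m (fun x => a * G1 x + G2 x).
  move=> m a G1 G2 [t1 [F1 [h1 [x1 [a1 [n1 s1]]]]]] [t2 [F2 [h2 [x2 [a2 [n2 s2]]]]]].
  exists (a * t1 + t2), (fun x => a * F1 x + F2 x); split; last split; last split; last split.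
  - by move=> z zb; rewrite lap_lin h1 // h2 // mulr0 addr0.
  - by move=> x xX; rewrite x1 // x2 //; ring.
  - by move=> y yA; rewrite a1 // a2 //; ring.
  - by rewrite n1 n2.
  - by move=> y; rewrite s1 s2; case: ifP => _; rewrite ?mulr0 ?addr0.
have Pdec : forall m Gf, P m.+1 Gf -> P m Gf.
  move=> m Gf [t [F [h H]]]; exists t, F; split => // z zb; apply: h; exact: ball_S.
have Psupp : forall m Gf, P m Gf -> forall x, x \notin None :: map Some A' -> Gf x = 0.
  move=> m Gf [t [F [_ [_ [_ [_ sG]]]]]] [y|]; last by rewrite mem_head.
  rewrite in_cons /= => yA; rewrite sG; case: ifP => // yA'.
  by move: yA; rewrite map_f.
have [M HM] := @stab R _ (None :: map Some A') P P0 PL Pdec Psupp.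
have [FM [hM [xM aM]]] := Hyp M.
pose Gm := fun o => match o with None => 1 | Some y => if y \in A' then FM y else 0 end.
have PM : P M Gm.
  exists 1, FM; split; last split; last split; last split.
  - exact: hM.
  - by move=> x xX; rewrite mul1r xM.
  - by move=> y yA; rewrite mul1r aM.
  - by [].
  - by [].
exists FM; split; last exact: aM.
move=> m; have [t [F [h [xF [_ [nF sF]]]]]] := HM (maxn m M) Gm (leq_maxr _ _) PM.
exists F; split; last split.
- by move=> z zb; apply: h; apply: (ball_mono (leq_maxl m M)).
- by move=> x xX; rewrite xF // -nF mul1r.
- by move=> y yA'; have := sF y; rewrite /= yA'.
Qed.

Lemma two_to_one (f : V -> R) :
  exists h : V -> R, harmonic G h /\ forall x, x \in X -> h x = f x.
Proof.
have [v0 _] : exists v0 : V, True.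
  apply: NNPP => H; apply: Hinf; exists [::] => v; exfalso; apply: H; by exists v.
pose ext n (g : V -> R) := forall m, exists F, Harm v0 m F /\ (forall y, y \in X -> F y = f y) /\
      (forall y, y \in ball v0 n -> F y = g y).
have i : inhabited (V -> R) := inhabits (fun _ => 0).
have e0 : exists g, ext 0%N g.
  have H0 : forall m, exists F, Harm v0 m F /\ (forall y, y \in X -> F y = f y) /\
      (forall y, y \in [::] -> F y = f y).
    move=> m; have [F [hF xF]] := extend_on (ball v0 m) f.
    by exists F; split; last split.
  have [g [Hg _]] := @step f v0 [::] (ball v0 0) f (fun z (zn : z \in [::]) => False_ind _ (notF zn)) H0.
  by exists g.
have eS : forall n g, ext n g -> exists g', ext n.+1 g' /\ forall y, y \in ball v0 n -> g' y = g y.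
  by move=> n g Hg; apply: step => //; apply: ball_S.
pose gs := fix gs n := match n with
  | 0 => epsilon i (ext 0%N)
  | n'.+1 => epsilon i (fun g' => ext n'.+1 g' /\ forall y, y \in ball v0 n' -> g' y = gs n' y) end.
have ext_gs : forall n, ext n (gs n).
  elim=> [|n IH] /=; first exact: epsilon_spec.
  by have [] := @epsilon_spec _ i _ (eS n (gs n) IH).
have agr1 : forall n y, y \in ball v0 n -> gs n.+1 y = gs n y.
  by move=> n y yb /=; have [_ ->] := @epsilon_spec _ i _ (eS n (gs n) (ext_gs n)).
have agr : forall n k y, y \in ball v0 n -> gs (n + k)%N y = gs n y.
  move=> n; elim=> [|k IH] y yb; first by rewrite addn0.
  by rewrite addnS agr1 ?IH // (ball_mono (leq_addr k n)).
pose N z := epsilon (inhabits 0%N) (fun n => z \in ball v0 n).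
have NN : forall z, z \in ball v0 (N z).
  move=> z; exact: (@epsilon_spec _ (inhabits 0%N) (fun n => z \in ball v0 n) (ball_all v0 z)).
pose h z := gs (N z) z.
have hag : forall n y, y \in ball v0 n -> h y = gs n y.
  move=> n y yb; rewrite /h; case: (leqP (N y) n) => le.
    by rewrite -(subnKC le) agr.
  by rewrite -(subnKC (ltnW le)) agr.
exists h; split.
  move=> x; set n := N x.
  have [F [hF [_ aF]]] := ext_gs n.+1 n.+1.
  rewrite (@lap_ext _ _ G h F); first by apply: hF; apply: ball_S.
  move=> y; rewrite in_cons => /orP [/eqP -> | yn].
    have xb : x \in ball v0 n.+1 by apply: ball_S; exact: NN.
    by rewrite (hag n.+1 x xb) aF.
  have yb : y \in ball v0 n.+1 by apply: (ball_nbr (NN x) yn).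
  by rewrite (hag n.+1 y yb) aF.
move=> x xX; have [F [_ [xF aF]]] := ext_gs 0%N 0%N.
by rewrite (hag 0%N x (ball_X v0 xX)) -aF ?ball_X // xF.
Qed.

End Main.

Theorem proposition5p1 (R : realType) (V : eqType) (G : wgraph R V)
    (X : seq V) :
  infinite_vertices V -> connected G ->
  (forall f : V -> R, exists h : V -> R,
      harmonic G h /\ forall x, x \in X -> h x = f x)
  <->
  ~ (exists u : V -> R, finitely_supported u /\ (exists v, u v <> 0) /\
       harmonic_on G (fun x => x \notin X) u).
Proof.
move=> Hinf Hcon; split; first exact: one_to_two.
by move=> NoU f; apply: two_to_one.
Qed.
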